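(* Let $\mathcal F$ be the class of all functions $\mathbb R^p\to\mathbb R^d$ representable by binary trees of depth at most $D$ in which every internal node queries ''$x_k\le\theta$?'' for some coordinate $k$ and some threshold $\theta\in\{1/\ell,\dots,1-1/\ell\}$ (going left if true, right otherwise), and every leaf assigns an arbitrary output $v\in\mathbb R^d$. Suppose $f^*\in\mathcal F$, $X\in[0,1]^p$, and $X$ has a density bounded below by $\mu_{\min}>0$ on $[0,1]^p$. Then there exists $\kappa$ such that for all $f\in\mathcal F$ and almost all $x$, $$\|f(x)-f^*(x)\|^2\le\kappa\,\mathbb E_X\|f(X)-f^*(X)\|^2.$$
   Context: $X\in\mathbb R^p$ is a random vector, $Y\in\mathbb R^d$ with $\|Y\|\le1$, and $f^*(x)=\mathbb E[Y\mid X=x]$; $\mathbb E_X$ is expectation over $X$; $\ell\ge2$ and $D\ge1$ are fixed integers. *)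

(* Defs.v *)
From HB Require Import structures.
From mathcomp Require Import all_boot all_order all_algebra.
From mathcomp Require Import all_classical all_reals all_analysis.
Set Implicit Arguments. Unset Strict Implicit. Unset Printing Implicit Defensive.
Import Order.TTheory GRing.Theory Num.Theory.
Local Open Scope ring_scope.
Local Open Scope classical_set_scope.

(* Binary decision trees: internal node (Node k j L R) queries
   "x_k <= j/l ?" and goes to L if true, R otherwise; leaves carry v in R^d. *)
Inductive dtree (R : Type) (p d : nat) : Type :=
  | Leaf of 'rV[R]_d
  | Node of 'I_p & nat & dtree R p d & dtree R p d.
Arguments Leaf {R p d}.
Arguments Node {R p d}.

Fixpoint tdepth {R : Type} {p d : nat} (t : dtree R p d) : nat :=
  match t with
  | Leaf _ => 0
  | Node _ _ tl tr => (maxn (tdepth tl) (tdepth tr)).+1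
  end.

Fixpoint tvalid {R : Type} {p d : nat} (l : nat) (t : dtree R p d) : Prop :=
  match t with
  | Leaf _ => True
  | Node _ j tl tr => (0 < j < l)%N /\ tvalid l tl /\ tvalid l tr
  end.

Fixpoint teval {R : realType} {p d : nat} (l : nat) (t : dtree R p d)
    (x : p.-tuple R) : 'rV[R]_d :=
  match t with
  | Leaf v => v
  | Node k j tl tr =>
      if tnth x k <= j%:R / l%:R then teval l tl x else teval l tr x
  end.

Definition tree_class (R : realType) (p d l D : nat)
    (f : p.-tuple R -> 'rV[R]_d) : Prop :=
  exists t : dtree R p d, tvalid l t /\ (tdepth t <= D)%N /\ f = teval l t.

Definition sqnorm (R : realType) (d : nat) (v : 'rV[R]_d) : R :=
  \sum_(i < d) (v ord0 i) ^+ 2.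

Definition unit_cube (R : realType) (p : nat) : set (p.-tuple R) :=
  [set x | forall k : 'I_p, 0 <= tnth x k <= 1].

Definition box (R : realType) (p : nat) (a b : 'I_p -> R) : set (p.-tuple R) :=
  [set x | forall k : 'I_p, a k <= tnth x k <= b k].

(* lam is (the Borel restriction of) Lebesgue measure on R^p: it gives every
   box its volume (this determines lam uniquely on the product sigma-algebra) *)
Definition is_lebesgue_measure (R : realType) (p : nat)
    (lam : {measure set (p.-tuple R) -> \bar R}) : Prop :=
  forall a b : 'I_p -> R, (forall k, a k <= b k) ->
    lam (box a b) = (\prod_(k < p) (b k - a k))%:E.

Definition is_cond_exp d (Omega : measurableType d) (R : realType) (p dd : nat)
    (P : probability Omega R) (X : Omega -> p.-tuple R) (Y : Omega -> 'rV[R]_dd)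
    (fstar : p.-tuple R -> 'rV[R]_dd) : Prop :=
  (forall i : 'I_dd, measurable_fun [set: p.-tuple R] (fun x => fstar x ord0 i)) /\
  (forall i : 'I_dd, P.-integrable [set: Omega] (fun w => (fstar (X w) ord0 i)%:E)) /\
  forall A : set (p.-tuple R), measurable A -> forall i : 'I_dd,
    (\int[P]_(w in X @^-1` A) (Y w ord0 i)%:E =
     \int[P]_(w in X @^-1` A) (fstar (X w) ord0 i)%:E)%E.

(* Main.v *)
Require Import Defs.
From HB Require Import structures.
From mathcomp Require Import all_boot all_order all_algebra.
From mathcomp Require Import all_classical all_reals all_analysis.
Import Order.TTheory GRing.Theory Num.Theory.
Local Open Scope ring_scope.
Local Open Scope classical_set_scope.

From mathcomp Require Import lra ring.
Set Implicit Arguments. Unset Strict Implicit.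

Section Helpers.
Variable R : realType.

Lemma teval_same p d l (t : dtree R p d) (x y : p.-tuple R) :
  tvalid l t ->
  (forall k (j : nat), (0 < j < l)%N ->
     (tnth x k <= j%:R / l%:R) = (tnth y k <= j%:R / l%:R)) ->
  teval l t x = teval l t y.
Proof.
move=> + H; elim: t => [v|k j tl IHl tr IHr] //= [hj [hl hr]].
by rewrite H // IHl // IHr.
Qed.

Lemma coord_cell (l : nat) (hl : (2 <= l)%N) (r : R) :
  exists j : nat, (0 < j <= l)%N /\
    forall i : nat, (0 < i < l)%N -> (r <= i%:R / l%:R) = (j <= i)%N.
Proof.
have l0 : (0 < l)%N by apply: leq_trans hl.
have ex : exists j, (0 < j)%N && ((r <= j%:R / l%:R) || (j == l)).
  by exists l; rewrite eqxx orbT andbT.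
case: (ex_minnP ex) => j /andP[j0 hj] jmin.
exists j; split.
  by rewrite j0 /=; apply: jmin; rewrite eqxx orbT andbT.
move=> i /andP[i0 il].
case: (leqP j i) => ji.
- case/orP: hj => [rj|/eqP jl]; last by move: ji il; rewrite jl => a b; have := leq_ltn_trans a b; rewrite ltnn.
  apply: (le_trans rj); rewrite ler_wpM2r // ?invr_ge0 ?ler0n ?ler_nat //.
- apply/negbTE/negP => ri.
  have := jmin i; rewrite i0 ri /= => /(_ isT) => ij.
  by have := leq_ltn_trans ij ji; rewrite ltnn.
Qed.

Lemma box_cell (l j i : nat) (hl : (0 < l)%N) (y : R) :
  ((j%:R - 2^-1) / l%:R <= y <= j%:R / l%:R) -> (0 < i)%N ->
  (y <= i%:R / l%:R) = (j <= i)%N.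
Proof.
move=> /andP[ay yb] i0.
have il : 0 < (l%:R : R)^-1 by rewrite invr_gt0 ltr0n.
case: (leqP j i) => ji.
  by apply: (le_trans yb); apply: ler_wpM2r; [exact: ltW | rewrite ler_nat].
apply/negbTE; rewrite -ltNge; apply: lt_le_trans ay.
rewrite ltr_pM2r //.
have : (i.+1%:R : R) <= j%:R by rewrite ler_nat.
rewrite -natr1 => h; lra.
Qed.

Lemma mteval p d l (t : dtree R p d) (i : 'I_d) :
  measurable_fun [set: p.-tuple R] (fun y => teval l t y ord0 i).
Proof.
elim: t => [v|k j tl IHl tr IHr] /=; first exact: measurable_cst.
rewrite (_ : (fun y => _) = (fun y => if tnth y k <= j%:R / l%:R
   then teval l tl y ord0 i else teval l tr y ord0 i)); last first.
  by apply: funext => y; case: ifP.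
apply: measurable_fun_ifT => //.
apply: measurable_realfun.measurable_fun_ler; first exact: measurable_tnth.
exact: measurable_cst.
Qed.

End Helpers.

Theorem proposition2 (R : realType) (p d l D : nat)
  (hl : (2 <= l)%N) (hD : (1 <= D)%N)
  (dO : measure_display) (Omega : measurableType dO) (P : probability Omega R)
  (X : Omega -> p.-tuple R) (mX : measurable_fun [set: Omega] X)
  (Y : Omega -> 'rV[R]_d)
  (mY : forall i : 'I_d, measurable_fun [set: Omega] (fun w => Y w ord0 i))
  (hY : forall w, sqnorm (Y w) <= 1)
  (fstar : p.-tuple R -> 'rV[R]_d)
  (hfstar : is_cond_exp P X Y fstar)
  (hFstar : tree_class l D fstar)
  (hXcube : P (X @^-1` @unit_cube R p) = 1%E)
  (lam : {measure set (p.-tuple R) -> \bar R}) (hlam : is_lebesgue_measure lam)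
  (mu_min : R) (hmu : 0 < mu_min)
  (g : p.-tuple R -> R) (mg : measurable_fun [set: p.-tuple R] g)
  (g_ge0 : forall x, 0 <= g x)
  (g_lb : forall x, @unit_cube R p x -> mu_min <= g x)
  (hdens : forall A : set (p.-tuple R), measurable A ->
     P (X @^-1` A) = (\int[lam]_(x in A) (g x)%:E)%E) :
  exists kappa : R, forall f : p.-tuple R -> 'rV[R]_d, tree_class l D f ->
    {ae P, forall w,
      ((sqnorm (f (X w) - fstar (X w)))%:E <=
       kappa%:E * \int[P]_w' (sqnorm (f (X w') - fstar (X w')))%:E)%E}.
Proof.
have l0 : (0 < l)%N by apply: leq_trans hl.
have lR : 0 < (l%:R : R) by rewrite ltr0n.
set c : R := 2^-1 / l%:R.
have c0 : 0 < c by rewrite divr_gt0.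
have mc0 : 0 < mu_min * c ^+ p by rewrite mulr_gt0 // exprn_gt0.
exists ((mu_min * c ^+ p)^-1).
move=> f [t [tv [_ ->]]].
case: hFstar => ts [tsv [_ Hfs]]; subst fstar.
apply: aeW => w.
set h := fun y => sqnorm (teval l t y - teval l ts y).
rewrite -/(h (X w)).
under eq_integral do rewrite -/(h (X _)).
set x := X w.
have [J HJ] := choice (fun k : 'I_p => coord_cell hl (tnth x k)).
pose a (k : 'I_p) : R := ((J k)%:R - 2^-1) / l%:R; pose b (k : 'I_p) : R := (J k)%:R / l%:R.
have hB y : box a b y -> h y = h x.
  move=> By.
  have Hs : forall k (j : nat), (0 < j < l)%N ->
      (tnth y k <= j%:R / l%:R) = (tnth x k <= j%:R / l%:R).
    move=> k j /andP[j0 jl]; have [_ Hk] := HJ k.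
    by rewrite Hk ?j0 ?jl // (box_cell l0 (By k) j0).
  by rewrite /h (teval_same tv Hs) (teval_same tsv Hs).
have mB : measurable (box a b).
  rewrite (_ : box a b = \bigcap_(k in [set: 'I_p])
      ((fun y => tnth y k) @^-1` [set` Interval (BLeft (a k)) (BRight (b k))])); last first.
    apply/seteqP; split => y /=.
      by move=> By k _ /=; rewrite in_itv /=; exact: (By k).
    by move=> Hy k; have := Hy k I; rewrite /= in_itv.
  apply: fin_bigcap_measurable; first exact: finite_finset.
  move=> k _; rewrite -[X in measurable X]setTI.
  by apply: (@measurable_tnth _ R p k measurableT); exact: measurable_itv.
have Bcube : box a b `<=` unit_cube (R:=R) (p:=p).
  move=> y By k; have [/andP[j0 jl] _] := HJ k; have /andP[ay yb] := By k.
  apply/andP; split.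
    apply: le_trans ay; rewrite /a divr_ge0 // ?ler0n //.
    have : (1:R) <= (J k)%:R by rewrite ler1n.
    lra.
  by apply: (le_trans yb); rewrite /b ler_pdivrMr // mul1r ler_nat.
have lamB : lam (box a b) = (c ^+ p)%:E.
  rewrite hlam; last first.
    by move=> k; rewrite /a /b ler_wpM2r ?invr_ge0 ?ler0n //; lra.
  congr (_%:E); rewrite (eq_bigr (fun=> c)); last first.
    move=> k _; rewrite /a /b /c; field; exact: lt0r_neq0.
  by rewrite prodr_const card_ord.
have mXB : measurable (X @^-1` box a b).
  by rewrite -[X in measurable X]setTI; exact: mX.
have PB : ((mu_min * c ^+ p)%:E <= P (X @^-1` box a b))%E.
  rewrite hdens // EFinM -lamB -integral_cst //.
  apply: ge0_le_integral => //.
  - by move=> y _; rewrite lee_fin ltW.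
  - by apply/measurable_realfun.measurable_EFinP; exact: measurable_funTS.
  - by move=> y By; rewrite lee_fin g_lb //; exact: Bcube.
have mh : measurable_fun setT h.
  rewrite /h /sqnorm; apply: measurable_sum => i; apply: measurable_realfun.measurable_funX.
  rewrite (_ : (fun y => _) = (fun y => teval l t y ord0 i - teval l ts y ord0 i)); last first.
    by apply: funext => y; rewrite !mxE.
  by apply: measurable_realfun.measurable_funB; exact: mteval.
have h0 y : 0 <= h y by rewrite /h /sqnorm sumr_ge0 // => i _; exact: sqr_ge0.
have Ih : ((h x * (mu_min * c ^+ p))%:E <= \int[P]_w' (h (X w'))%:E)%E.
  apply: (@le_trans _ _ (\int[P]_(w' in X @^-1` box a b) (h (X w'))%:E)%E); last first.
    apply: ge0_subset_integral => //.
      by apply/measurable_realfun.measurable_EFinP; exact: measurableT_comp mh mX.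
    by move=> ? _; rewrite lee_fin.
  rewrite (eq_integral (cst (h x)%:E)); last first.
    by move=> y; rewrite inE => By; rewrite /= hB.
  rewrite integral_cst // EFinM; apply: lee_pmul => //; rewrite ?lee_fin // ltW //.
apply: le_trans (_ : ((mu_min * c ^+ p)^-1%:E * (h x * (mu_min * c ^+ p))%:E <= _)%E).
  by rewrite -EFinM lee_fin mulrCA mulVf ?mulr1 // lt0r_neq0.
apply: lee_pmul => //.
- by rewrite lee_fin invr_ge0 (ltW mc0).
- by rewrite lee_fin mulr_ge0 // (ltW mc0).
Qed.
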